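(* Consider the setting in the context. Let $\mathcal F=\{i_0,\dots,i_{\bar h-1}\}\subseteq[\bar n]$ be $\bar h$ distinct racks, $p\in[\bar h]$, $S=S_{\lfloor p/(\bar h-\delta+1)\rfloor}$, and let $\mathbf{C}$ be any codeword. (1) Let $b\in[1,u-v]$ and $\mathcal R\subseteq[\bar n]\setminus\mathcal F$ with $|\mathcal R|=\bar d$. For every $m\in[b]$ and every $a\in[l]$ with $a|_S\in\mathcal V_0$, the quantities $\sum_{g=0}^{u-1}\theta^{gm}c_{i_pu+g,a}$, $\sum_{g=0}^{u-1}\theta^{gm}c_{i_pu+g,a(i_p,a_{i_p}\oplus1)}$ and $H_{i_p,i}(a,m)$ for $i\in\mathcal F\setminus\{i_p\}$ are determined by (are linear functions of) the values $\{H_{i_p,j}(a',m): j\in\mathcal R,\ m\in[b],\ a'\in[l],\ a'|_S\in\mathcal V_0\}$. (2) Let $b\in[u-v+1,u]$ and $\mathcal R'\subseteq[\bar n]\setminus\mathcal F$ with $|\mathcal R'|=\bar d+1$. For every $m\in[u-v,b)$ and every $a\in[l]$ with $a|_S\in\mathcal V_0$, the same quantities are determined by (are linear functions of) the values $\{H_{i_p,j}(a',m): j\in\mathcal R',\ m\in[u-v,b),\ a'\in[l],\ a'|_S\in\mathcal V_0\}$.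
   Context: $[N]=\{0,\dots,N-1\}$. Integers: $\bar n$, $u>1$, $\bar k$, $0\le v<u$, $n=\bar nu$, $k=\bar ku+v$, $r=n-k$, $\bar r=\bar n-\bar k$; $\bar d=\bar k+1$; $\bar h,\delta$ with $\delta\in[1,\bar h)$, $\bar d\le\bar n-\bar h$, $\bar h-\delta+2=2^{\bar m}$ for some integer $\bar m\ge1$, and $(\bar h-\delta+1)\mid\bar h$. $l=2^{\bar n}$. $\mathbb{F}$ is a finite field with $|\mathbb{F}|\ge2n+1$ containing an element $\theta$ of multiplicative order $u$; $\xi$ is a primitive element and $\lambda_{i,j}=\xi^{2i+j}$ for $i\in[\bar n]$, $j\in\{0,1\}$. For $a\in[l]$ write $a=(a_{\bar n-1},\dots,a_0)$ in binary, and $a(i,j)$ is $a$ with its $i$-th bit replaced by $j$; $\oplus$ is addition mod 2. The code $\mathbf{C}$ consists of all $(c_{iu+g,a})_{i\in[\bar n],g\in[u],a\in[l]}$ over $\mathbb{F}$ (node $iu+g$ stores $(c_{iu+g,a})_{a\in[l]}$) with $\sum_{i=0}^{\bar n-1}\sum_{g=0}^{u-1}\theta^{gt}\lambda_{i,a_i}^tc_{iu+g,a}=0$ for all $t\in[r]$, $a\in[l]$. For distinct racks $i,j$, $a\in[l]$ and integer $m$, $H_{i,j}(a,m)=\sum_{g=0}^{u-1}\theta^{gm}c_{ju+g,a}+\sum_{g=0}^{u-1}\theta^{gm}c_{ju+g,a(i,a_i\oplus1)}$. $\mathcal V_0\subseteq\mathbb{F}_2^{2^{\bar m}-1}$ is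 the binary Hamming code of length $2^{\bar m}-1$, i.e. the kernel of a $\bar m\times(2^{\bar m}-1)$ binary matrix whose columns are all the nonzero vectors of $\mathbb{F}_2^{\bar m}$. For $q\in[\bar h/(\bar h-\delta+1))$, $S_q=\{i_{q'}: q'\in[q(\bar h-\delta+1),(q+1)(\bar h-\delta+1))\}$. For $J=\{j_0<\dots<j_{e-1}\}\subseteq[\bar n]$, the puncturing $a|_J=(a_{j_{e-1}},\dots,a_{j_0})\in\mathbb{F}_2^{e}$. *)

(* Defs.v *)
From HB Require Import structures.
From mathcomp Require Import all_boot all_order all_algebra all_field.
Set Implicit Arguments. Unset Strict Implicit. Unset Printing Implicit Defensive.
Import GRing.Theory.
Local Open Scope ring_scope.

(* An index a in [l], l = 2^nbar, is represented by its binary expansion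
   (a_{nbar-1},...,a_0) as a bit vector a : {ffun 'I_nbar -> bool}. *)
Notation idx nbar := {ffun 'I_nbar -> bool}.

Definition setbit (nbar : nat) (a : idx nbar) (i : 'I_nbar) (j : bool) : idx nbar :=
  [ffun k => if k == i then j else a k].

(* array code content: node i*u+g (rack i, position g) stores (c i g a)_{a in [l]} *)
Definition cw (F : Type) (nbar u : nat) := 'I_nbar -> 'I_u -> idx nbar -> F.

Definition lam (F : fieldType) (xi : F) (nbar : nat) (i : 'I_nbar) (j : bool) : F :=
  xi ^+ (2 * i + j).

Definition codeword (F : fieldType) (nbar u k : nat) (theta xi : F) (c : cw F nbar u)
  : Prop :=
  forall t : nat, (t < nbar * u - k)%N -> forall a : idx nbar,
    \sum_(i < nbar) \sum_(g < u) theta ^+ (g * t) * (lam xi i (a i)) ^+ t * c i g a = 0.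

Definition rsum (F : fieldType) (nbar u : nat) (theta : F) (c : cw F nbar u)
  (j : 'I_nbar) (a : idx nbar) (m : nat) : F :=
  \sum_(g < u) theta ^+ (g * m) * c j g a.

Definition Hval (F : fieldType) (nbar u : nat) (theta : F) (c : cw F nbar u)
  (i j : 'I_nbar) (a : idx nbar) (m : nat) : F :=
  rsum theta c j a m + rsum theta c j (setbit a i (addb (a i) true)) m.

Definition hamming_matrix (mbar : nat) (H0 : 'M['F_2]_(mbar, 2 ^ mbar - 1)) : Prop :=
  (forall t, col t H0 != 0) /\ (forall w : 'cV['F_2]_mbar, w != 0 -> exists t, col t H0 = w).

Definition in_hamming (mbar : nat) (H0 : 'M['F_2]_(mbar, 2 ^ mbar - 1)) (x : seq bool)
  : bool :=
  (size x == (2 ^ mbar - 1)%N) &&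
  (H0 *m (\col_(t < 2 ^ mbar - 1) ((nth false x t : nat)%:R : 'F_2)) == 0).

(* puncturing a|_J = (a_{j_{e-1}},...,a_{j_0}); as a sequence its t-th entry
   is a_{j_t}, j_0 < ... < j_{e-1} the elements of J *)
Definition puncture (nbar : nat) (J : {set 'I_nbar}) (a : idx nbar) : seq bool :=
  [seq a j | j <- enum J].

Definition Sq (nbar hbar : nat) (rk : 'I_hbar -> 'I_nbar) (w q : nat) : {set 'I_nbar} :=
  [set rk q' | q' : 'I_hbar & (q * w <= q' < q.+1 * w)%N].

Definition determined_by (F : fieldType) (nbar u k : nat) (theta xi : F)
  (ip : 'I_nbar) (Rs : {set 'I_nbar}) (lo hi : nat) (inV : pred (idx nbar))
  (Q : cw F nbar u -> F) : Prop :=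
  exists coef : 'I_nbar -> nat -> idx nbar -> F,
    forall c : cw F nbar u, codeword k theta xi c ->
      Q c = \sum_(j in Rs) \sum_(lo <= m' < hi) \sum_(a' | inV a')
              coef j m' a' * Hval theta c ip j a' m'.

(* Main.v *)
Require Import Defs.
From HB Require Import structures.
From mathcomp Require Import all_boot all_order all_algebra all_field.
From mathcomp Require Import ring zify.
Import GRing.Theory.
Set Implicit Arguments. Unset Strict Implicit.
Local Open Scope ring_scope.

Lemma lamu_inj (F : finFieldType) (xi : F) (nbar u : nat) (Hu : (0 < u)%N)
  (HF : (2 * (nbar * u) + 1 <= #|F|)%N) (Hxi : (#|F|.-1).-primitive_root xi)
  (i i' : 'I_nbar) (j j' : bool) :
  lam xi i j ^+ u = lam xi i' j' ^+ u -> i = i' /\ j = j'.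
Proof.
rewrite /lam -!exprM => /eqP; rewrite (eq_prim_root_expr Hxi) !modn_small; last first.
- have hi := ltn_ord i; have h : (2 * i + j < 2 * nbar)%N.
    by case: j; rewrite /nat_of_bool; lia.
  apply: (@leq_trans (2 * nbar * u)); first by rewrite ltn_pmul2r.
  lia.
- have hi := ltn_ord i'; have h : (2 * i' + j' < 2 * nbar)%N.
    by case: j'; rewrite /nat_of_bool; lia.
  apply: (@leq_trans (2 * nbar * u)); first by rewrite ltn_pmul2r.
  lia.
rewrite eqn_pmul2r // => /eqP h.
have hi : (i : nat) = i' by case: j j' h => [] []; rewrite /nat_of_bool; lia.
split; first exact: val_inj.
by case: j j' h => [] []; rewrite /nat_of_bool; lia.
Qed.

Lemma xi_neq0 (F : finFieldType) (xi : F) (n : nat) (Hn : (0 < n)%N)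
  (Hxi : n.-primitive_root xi) : xi != 0.
Proof.
apply/eqP => h; have := prim_expr_order Hxi; rewrite h expr0n.
by rewrite eqn0Ngt Hn /= => /eqP; rewrite eq_sym oner_eq0.
Qed.

Definition lamo (F : fieldType) (xi : F) nbar (ip : 'I_nbar) (a : idx nbar) (o : option 'I_nbar) : F :=
  match o with None => lam xi ip (addb (a ip) true) | Some i => lam xi i (a i) end.

Definition yv (F : fieldType) nbar u (theta : F) (c : cw F nbar u) (ip : 'I_nbar) (a : idx nbar) m
  (o : option 'I_nbar) : F :=
  match o with
  | None => rsum theta c ip (setbit a ip (addb (a ip) true)) m
  | Some i => if i == ip then rsum theta c ip a m else Hval theta c ip i a m
  end.

Lemma sum_option (R : nmodType) (I : finType) (G : option I -> R) :
  \sum_o G o = G None + \sum_i G (Some i).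
Proof.
rewrite (bigD1 None) //=; congr (_ + _).
rewrite (reindex_omap Some (fun o => o)) //=; last by case.
by apply: eq_bigl => i; rewrite eqxx.
Qed.

Lemma eqn_opt (F : fieldType) nbar u k (theta xi : F) (Htheta : u.-primitive_root theta)
  (c : cw F nbar u) (Hc : codeword k theta xi c) ip a m s
  (Ht : (m + u * s < nbar * u - k)%N) :
  \sum_o lamo xi ip a o ^+ m * (lamo xi ip a o ^+ u) ^+ s * yv theta c ip a m o = 0.
Proof.
set t := (m + u * s)%N.
have rs : forall b : idx nbar,
  \sum_(i < nbar) \sum_(g < u) theta ^+ (g * t) * (lam xi i (b i)) ^+ t * c i g b
  = \sum_i lam xi i (b i) ^+ t * rsum theta c i b m.
  move=> b; apply: eq_bigr => i _; rewrite /rsum mulr_sumr; apply: eq_bigr => g _.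
  have -> : (g * t = g * m + u * (g * s))%N by rewrite /t; lia.
  rewrite exprD [theta ^+ (u * _)]exprM (prim_expr_order Htheta) expr1n mulr1; ring.
set abar := setbit a ip (addb (a ip) true).
have ea := Hc t Ht a; have eb := Hc t Ht abar.
rewrite rs in ea; rewrite rs in eb.
rewrite -[RHS](addr0 0) -[X in _ = X + _]ea -[X in _ = _ + X]eb.
rewrite sum_option.
have pw : forall z : F, z ^+ m * (z ^+ u) ^+ s = z ^+ t.
  by move=> z; rewrite -exprM -exprD.
rewrite pw.
rewrite (bigD1 ip) //= [X in _ = X + _](bigD1 ip) //= [X in _ = _ + X](bigD1 ip) //=.
rewrite eqxx /abar ffunE eqxx.
have -> : \sum_(i < nbar | i != ip) lam xi i (a i) ^+ m * (lam xi i (a i) ^+ u) ^+ s * yv theta c ip a m (Some i) =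
  \sum_(i < nbar | i != ip) lam xi i (a i) ^+ t * rsum theta c i a m +
  \sum_(i < nbar | i != ip) lam xi i ((setbit a ip (addb (a ip) true)) i) ^+ t * rsum theta c i (setbit a ip (addb (a ip) true)) m.
  rewrite -big_split; apply: eq_bigr => i /negbTE hi /=.
  by rewrite pw hi /Hval ffunE hi mulrDr.
rewrite pw /=; ring.
Qed.
Lemma interp (F : fieldType) (I : finType) (x w : I -> F) (K : {set I}) (E : nat) (i0 : I) :
  injective x -> w i0 != 0 -> (#|~: K| <= E)%N -> i0 \notin K ->
  exists d : I -> F, forall y : I -> F,
    (forall s, (s < E)%N -> \sum_i w i * x i ^+ s * y i = 0) ->
    y i0 = \sum_(j in K) d j * y j.
Proof.
move=> xinj w0 cardK i0K.
pose P := \prod_(i in (~: K) :\ i0) ('X - (x i)%:P).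
have sizeP : (size P <= E)%N.
  rewrite /P -big_enum -(big_map x predT (fun z => 'X - z%:P)) size_prod_XsubC size_map.
  rewrite -cardE; move: cardK; rewrite (cardsD1 i0 (~: K)) inE i0K /=; done.
have Pz : forall i, i \in (~: K) :\ i0 -> P.[x i] = 0.
  move=> i Hi; rewrite /P horner_prod (bigD1 i) //= hornerXsubC subrr mul0r //.
have Pnz : P.[x i0] != 0.
  rewrite /P horner_prod; apply/prodf_neq0 => i; rewrite !inE => /andP[Hi _].
  by rewrite hornerXsubC subr_eq0; apply/eqP => /xinj/eqP; rewrite eq_sym (negbTE Hi).
exists (fun j => - (w i0 * P.[x i0])^-1 * (w j * P.[x j])).
move=> y Hy.
have key : \sum_i w i * y i * P.[x i] = 0.
  transitivity (\sum_(s < E) P`_s * \sum_i w i * x i ^+ s * y i).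
    symmetry; under eq_bigr do rewrite mulr_sumr.
    rewrite exchange_big /=; apply: eq_bigr => i _.
    rewrite (horner_coef_wide _ sizeP) mulr_sumr; apply: eq_bigr => s _.
    ring.
  by apply: big1 => s _; rewrite Hy // mulr0.
rewrite (bigID (fun i => i \notin K)) /= (bigD1 i0) //= in key.
rewrite [X in _ + X + _]big1 in key; last first.
  move=> i /andP[iK ii0]; by rewrite Pz ?mulr0 // !inE ii0 iK.
rewrite addr0 (eq_bigl (fun i => i \in K)) in key; last by move=> i; rewrite negbK.
have : y i0 = - (w i0 * P.[x i0])^-1 * \sum_(i in K) w i * y i * P.[x i].
  apply: (mulfI (mulf_neq0 w0 Pnz)). rewrite mulrA mulrN divff ?mulf_neq0 // mulN1r.
  apply/eqP; rewrite -subr_eq0 opprK -[X in _ == X]key; apply/eqP; ring.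
move=> ->; rewrite mulr_sumr; apply: eq_bigr => i _; ring.
Qed.

Lemma some_inj (T : Type) : injective (@Some T).
Proof. by move=> x y []. Qed.

Lemma core (F : finFieldType) nbar u k (theta xi : F) (Hu : (1 < u)%N)
  (HF : (2 * (nbar * u) + 1 <= #|F|)%N)
  (Htheta : u.-primitive_root theta) (Hxi : (#|F|.-1).-primitive_root xi)
  (ip : 'I_nbar) (R : {set 'I_nbar}) (E m : nat) (a : idx nbar) (o : option 'I_nbar)
  (HipR : ip \notin R) (Hcard : (nbar.+1 <= #|R| + E)%N)
  (Ht : forall s, (s < E)%N -> (m + u * s < nbar * u - k)%N)
  (Ho : o \notin Some @: R) :
  exists d : 'I_nbar -> F, forall c : cw F nbar u, codeword k theta xi c ->
    yv theta c ip a m o = \sum_(j in R) d j * Hval theta c ip j a m.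
Proof.
have Hu0 : (0 < u)%N by lia.
have Hn : (0 < #|F|.-1)%N by have := ltn_ord ip; nia.
have inj : injective (fun o => lamo xi ip a o ^+ u).
  move=> [i|] [i'|] /= /(lamu_inj Hu0 HF Hxi) [ei ej]; rewrite ?ei //.
  + by move: ej; rewrite ei addbT; case: (a ip).
  + by move: ej; rewrite -ei addbT; case: (a ip).
have wnz : lamo xi ip a o ^+ m != 0.
  by rewrite expf_neq0 // /lamo; case: o Ho => [i|] _; rewrite /lam expf_neq0 // (xi_neq0 Hn Hxi).
have crd : (#|~: (Some @: R)| <= E)%N.
  have := cardsC (Some @: R); rewrite card_option card_ord (card_imset _ (@some_inj _)).
  lia.
have [d Hd] := interp (w := fun o => lamo xi ip a o ^+ m) inj wnz crd Ho.
exists (fun j => d (Some j)) => c Hc.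
rewrite (Hd (yv theta c ip a m)); last first.
  move=> s hs; have := eqn_opt Htheta Hc ip a (Ht s hs); exact.
rewrite big_imset /=; last by move=> ? ? _ _ [].
apply: eq_bigr => j hj /=.
have -> : (j == ip) = false by apply/negbTE/eqP => e; rewrite -e hj in HipR.
done.
Qed.

Lemma det_of (F : fieldType) nbar u k (theta xi : F) (ip : 'I_nbar) (R : {set 'I_nbar})
  lo hi (inV : pred (idx nbar)) m a (Hm : (lo <= m < hi)%N) (Ha : inV a)
  (Q : cw F nbar u -> F) :
  (exists d : 'I_nbar -> F, forall c, codeword k theta xi c ->
     Q c = \sum_(j in R) d j * Hval theta c ip j a m) ->
  determined_by k theta xi ip R lo hi inV Q.
Proof.
case=> d Hd; exists (fun j m' a' => if (m' == m) && (a' == a) then d j else 0).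
move=> c Hc; rewrite Hd //; apply: eq_bigr => j _.
rewrite (bigD1_seq m) ?mem_index_iota ?iota_uniq //= (bigD1 a) //= !eqxx /=.
rewrite big1; last by move=> a' /andP[_ /negbTE ->]; rewrite ?andbF ?mul0r.
rewrite addr0 big1 ?addr0 // => i /negbTE him; rewrite big1 // => a' _; rewrite him /= mul0r.
done.
Qed.

Lemma triple (F : finFieldType) nbar u k (theta xi : F) (Hu : (1 < u)%N)
  (HF : (2 * (nbar * u) + 1 <= #|F|)%N)
  (Htheta : u.-primitive_root theta) (Hxi : (#|F|.-1).-primitive_root xi)
  (ip : 'I_nbar) (R : {set 'I_nbar}) (E m lo hi : nat) (inV : pred (idx nbar)) (a : idx nbar)
  (Hm : (lo <= m < hi)%N) (Ha : inV a)
  (HipR : ip \notin R) (Hcard : (nbar.+1 <= #|R| + E)%N)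
  (Ht : forall s, (s < E)%N -> (m + u * s < nbar * u - k)%N) :
  [/\ determined_by (u:=u) k theta xi ip R lo hi inV
        (fun c : cw F nbar u => rsum theta c ip a m),
      determined_by (u:=u) k theta xi ip R lo hi inV
        (fun c : cw F nbar u => rsum theta c ip (setbit a ip (addb (a ip) true)) m)
    & forall i, i \notin R -> i != ip ->
      determined_by (u:=u) k theta xi ip R lo hi inV
        (fun c : cw F nbar u => Hval theta c ip i a m)].
Proof.
split.
- apply: (det_of Hm Ha).
  have [d Hd] := @core F nbar u k theta xi Hu HF Htheta Hxi ip R E m a (Some ip) HipR Hcard Ht
    ltac:(by rewrite mem_imset //; exact: some_inj).
  by exists d => c Hc; rewrite -(Hd c Hc) /= eqxx.
- apply: (det_of Hm Ha).
  have [d Hd] := @core F nbar u k theta xi Hu HF Htheta Hxi ip R E m a None HipR Hcard Ht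
    ltac:(by apply/imsetP => -[]).
  by exists d => c Hc; rewrite -(Hd c Hc).
- move=> i iR iip; apply: (det_of Hm Ha).
  have [d Hd] := @core F nbar u k theta xi Hu HF Htheta Hxi ip R E m a (Some i) HipR Hcard Ht
    ltac:(by rewrite mem_imset //; exact: some_inj).
  by exists d => c Hc; rewrite -(Hd c Hc) /= (negbTE iip).
Qed.
Theorem lemma4 (F : finFieldType) (nbar u kbar v hbar delta mbar : nat) (theta xi : F)
  (Hu : (1 < u)%N) (Hv : (v < u)%N)
  (Hdelta1 : (1 <= delta)%N) (Hdelta2 : (delta < hbar)%N)
  (Hdbar : (kbar.+1 <= nbar - hbar)%N)
  (Hmbar1 : (1 <= mbar)%N) (Hmbar : (hbar - delta + 2 = 2 ^ mbar)%N)
  (Hdiv : ((hbar - delta + 1) %| hbar)%N)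
  (HF : (2 * (nbar * u) + 1 <= #|F|)%N)
  (Htheta : u.-primitive_root theta) (Hxi : (#|F|.-1).-primitive_root xi)
  (H0 : 'M['F_2]_(mbar, 2 ^ mbar - 1)) (HH0 : hamming_matrix H0)
  (rk : 'I_hbar -> 'I_nbar) (Hrk : injective rk) (p : 'I_hbar) :
  let k := (kbar * u + v)%N in
  let S := Sq rk (hbar - delta + 1) (p %/ (hbar - delta + 1)) in
  let inV := fun a : idx nbar => in_hamming H0 (puncture S a) in
  let Fr := [set rk x | x : 'I_hbar] in
  (forall (b : nat) (R : {set 'I_nbar}),
     (1 <= b <= u - v)%N -> [disjoint R & Fr] -> #|R| = kbar.+1 ->
     forall (m : nat) (a : idx nbar), (m < b)%N -> inV a ->
       [/\ determined_by (u:=u) k theta xi (rk p) R 0 b inV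
             (fun c : cw F nbar u => rsum theta c (rk p) a m),
           determined_by (u:=u) k theta xi (rk p) R 0 b inV
             (fun c : cw F nbar u => rsum theta c (rk p) (setbit a (rk p) (addb (a (rk p)) true)) m)
         & forall i' : 'I_hbar, i' != p ->
           determined_by (u:=u) k theta xi (rk p) R 0 b inV
             (fun c : cw F nbar u => Hval theta c (rk p) (rk i') a m)]) /\
  (forall (b : nat) (R' : {set 'I_nbar}),
     (u - v + 1 <= b <= u)%N -> [disjoint R' & Fr] -> #|R'| = kbar.+2 ->
     forall (m : nat) (a : idx nbar), (u - v <= m < b)%N -> inV a ->
       [/\ determined_by (u:=u) k theta xi (rk p) R' (u - v) b inV
             (fun c : cw F nbar u => rsum theta c (rk p) a m),
           determined_by (u:=u) k theta xi (rk p) R' (u - v) b inV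
             (fun c : cw F nbar u => rsum theta c (rk p) (setbit a (rk p) (addb (a (rk p)) true)) m)
         & forall i' : 'I_hbar, i' != p ->
           determined_by (u:=u) k theta xi (rk p) R' (u - v) b inV
             (fun c : cw F nbar u => Hval theta c (rk p) (rk i') a m)]).
Proof.
move=> k S inV Fr.
have hFr : forall x, rk x \in Fr by move=> x; apply/imsetP; exists x.
have rkne : forall i', i' != p -> rk i' != rk p.
  by move=> i' hi'; apply/eqP => e; move/eqP: hi'; apply; exact: Hrk e.
split.
- move=> b R /andP[hb1 hb2] hdis hcard m a hm ha.
  have nR : forall x, rk x \notin R by move=> x; rewrite (disjointFl hdis (hFr x)).
  have [|||t1 t2 t3] := @triple F nbar u k theta xi Hu HF Htheta Hxi (rk p) R (nbar - kbar) m 0 b inV a _ ha (nR p).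
  + by rewrite hm.
  + rewrite hcard; lia.
  + move=> s hs; rewrite /k; nia.
  split => // i' hi'; apply: t3; [exact: nR | exact: rkne].
- move=> b R /andP[hb1 hb2] hdis hcard m a /andP[hm1 hm2] ha.
  have nR : forall x, rk x \notin R by move=> x; rewrite (disjointFl hdis (hFr x)).
  have [|||t1 t2 t3] := @triple F nbar u k theta xi Hu HF Htheta Hxi (rk p) R (nbar - kbar).-1 m (u - v) b inV a _ ha (nR p).
  + by rewrite hm1 hm2.
  + rewrite hcard; lia.
  + move=> s hs; rewrite /k; nia.
  split => // i' hi'; apply: t3; [exact: nR | exact: rkne].
Qed.
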